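(* The continuum $|\mathbb G|$ is one-dimensional.
   Context: A graph is a pair $A=(V(A),E(A))$ with $E(A)$ reflexive and symmetric; a topological graph additionally has $V$ compact, second countable, zero-dimensional and $E$ closed. Epimorphisms are (continuous) edge-preserving maps surjective on vertices and edges. A vertex set $S$ is disconnected if it splits into two nonempty closed subsets with no edges between them; otherwise connected; components are maximal connected subsets. An epimorphism $f\colon A\to B$ is confluent if for every connected $Q\subseteq V(B)$ each component $C$ of $f^{-1}(Q)$ satisfies $f(C)=Q$. $\mathcal G$ is the class of finite connected graphs with confluent epimorphisms, and $\mathbb G$ is its projective Fraïssé limit: the unique topological graph such that (1) every $A\in\mathcal G$ is a confluent epimorphic image of $\mathbb G$; (2) for $A,B\in\mathcal G$ and confluent epimorphisms $f\colon\mathbb G\to A$, $g\colon B\to A$ there is a confluent epimorphism $h\colon\mathbb G\to B$ with $f=g\circ h$; (3) for each $\varepsilon>0$ some confluent epimorphism from $\mathbb G$ onto a member of $\mathcal G$ has all point-preimages of diameter $<\varepsilon$. The edge relation of $\mathbb G$ is an equivalence relation and $|\mathbb G|=V(\mathbb G)/E(\mathbb G)$ is its topological realization. *)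

(* Defs.v *)
From HB Require Import structures.
From mathcomp Require Import all_boot all_order all_algebra.
From mathcomp Require Import all_classical all_reals all_analysis.
Set Implicit Arguments. Unset Strict Implicit. Unset Printing Implicit Defensive.
Import Order.TTheory GRing.Theory Num.Theory.
Local Open Scope classical_set_scope.
Local Open Scope ring_scope.

Section GraphConnectedness.
Variables (X : Type) (e : X -> X -> Prop) (cl : set X -> Prop).

Definition rel_closed (S P : set X) := exists F, cl F /\ P = S `&` F.

Definition gdisconnected (S : set X) :=
  exists P Q : set X, [/\ P !=set0 /\ Q !=set0, rel_closed S P, rel_closed S Q,
    P `|` Q = S & forall x y, P x -> Q y -> ~ e x y].

Definition gconnected (S : set X) := ~ gdisconnected S.

Definition gcomponent (S C : set X) :=
  [/\ C `<=` S, gconnected C &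
      forall D, C `<=` D -> D `<=` S -> gconnected D -> D = C].
End GraphConnectedness.

Definition conf_epi (X Y : Type) (eX : X -> X -> Prop) (clX : set X -> Prop)
    (eY : Y -> Y -> Prop) (clY : set Y -> Prop) (f : X -> Y) :=
  [/\ (forall x y, eX x y -> eY (f x) (f y)),
      (forall b, exists a, f a = b),
      (forall a b, eY a b -> exists x y, [/\ eX x y, f x = a & f y = b]) &
      (forall Q : set Y, gconnected eY clY Q ->
         forall C, gcomponent eX clX (f @^-1` Q) C -> f @` C = Q)].

(** Finite graphs carry the discrete topology: every set is closed. *)
Definition all_closed (T : Type) : set T -> Prop := fun _ => True.

Definition fin_conn_graph (T : finType) (eA : rel T) :=
  [/\ 0 < #|T|, reflexive eA, symmetric eA &
      gconnected (fun a b => eA a b) (@all_closed T) setT]%N.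

Definition fconf_epi (B A : finType) (eB : rel B) (eA : rel A) (g : B -> A) :=
  conf_epi (fun x y => eB x y) (@all_closed B) (fun a b => eA a b)
    (@all_closed A) g.

Section TopGraph.
Variables (R : realType) (V : pseudoMetricType R) (E : V -> V -> Prop).

Definition topgraph :=
  [/\ compact [set: V] /\ @second_countable V, zero_dimensional V,
      closed [set p : V * V | E p.1 p.2],
      (forall x, E x x) & (forall x y, E x y -> E y x)].

(** Continuous confluent epimorphism from (V, E) onto a finite graph
    (continuity into the discrete finite space = every fibre is open). *)
Definition tconf_epi (A : finType) (eA : rel A) (f : V -> A) :=
  (forall a, open (f @^-1` [set a])) /\
  conf_epi E (@closed V) (fun a b => eA a b) (@all_closed A) f.

Definition fraisse1 :=
  forall (A : finType) (eA : rel A), fin_conn_graph eA ->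
    exists f : V -> A, tconf_epi eA f.

Definition fraisse2 :=
  forall (A B : finType) (eA : rel A) (eB : rel B),
    fin_conn_graph eA -> fin_conn_graph eB ->
    forall (f : V -> A) (g : B -> A), tconf_epi eA f -> fconf_epi eB eA g ->
      exists h : V -> B, tconf_epi eB h /\ f = g \o h.

Definition fraisse3 :=
  forall eps : R, 0 < eps ->
    exists (A : finType) (eA : rel A) (f : V -> A),
      [/\ fin_conn_graph eA, tconf_epi eA f &
        forall a, exists2 d : R, d < eps &
          forall x y, f x = a -> f y = a -> ball x d y].

(** Topological realization |V| = V / E: points are the E-classes, a set of
    classes is open iff its union is open in V (quotient topology). *)
Definition realization := {C : set V | exists x, C = E x}.

Definition realization_open (U : set realization) :=
  open [set x : V | exists C : realization, U C /\ (sval C) x].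
End TopGraph.

(** Covering (Cech-Lebesgue) dimension <= n of a space given by its open sets:
    every finite open cover has a finite open refinement of order <= n+1. *)
Definition covdim_le (X : Type) (opn : set X -> Prop) (n : nat) :=
  forall (k : nat) (U : 'I_k -> set X), (forall i, opn (U i)) ->
    (forall x, exists i, U i x) ->
    exists (m : nat) (W : 'I_m -> set X),
      [/\ (forall j, opn (W j)), (forall x, exists j, W j x),
          (forall j, exists i, W j `<=` U i) &
          (forall x (S : {set 'I_m}), (forall j, j \in S -> W j x) ->
             (#|S| <= n.+1)%N)].

Definition one_dimensional (X : Type) (opn : set X -> Prop) :=
  covdim_le opn 1 /\ ~ covdim_le opn 0.

(* Main.v *)
Require Import Defs.
From HB Require Import structures.
From mathcomp Require Import all_boot all_order all_algebra.
From mathcomp Require Import all_classical all_reals all_analysis.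
From mathcomp Require Import lra.
Set Implicit Arguments. Unset Strict Implicit. Unset Printing Implicit Defensive.
Import Order.TTheory GRing.Theory Num.Theory.
Local Open Scope classical_set_scope.
Lemma star_conn (T : Type) (e : T -> T -> Prop) (cl : set T -> Prop) (S : set T) c :
  (forall x y, e x y -> e y x) -> S c -> (forall y, S y -> e c y) -> gconnected e cl S.
Proof.
move=> sym Sc Hc [P [Q [[[p Pp] [q Qq]] _ _ PQ noE]]].
have : (P `|` Q) c by rewrite PQ.
case=> [Pc|Qc].
  by apply: (noE c q Pc Qq); apply: Hc; rewrite -PQ; right.
by apply: (noE p c Pp Qc); apply: sym; apply: Hc; rewrite -PQ; left.
Qed.

Section Pre.
Variables (A B : Type) (eA : A -> A -> Prop) (eB : B -> B -> Prop) (g : B -> A) (c : A -> B).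
Hypotheses (symB : forall x y, eB x y -> eB y x) (gc : forall a, g (c a) = a)
  (cw : forall w, eB (c (g w)) w)
  (lift : forall a b, eA a b -> exists x y, [/\ eB x y, g x = a & g y = b])
  (pres : forall x y, eB x y -> eA (g x) (g y)).

Lemma pre_conn Q0 : gconnected eA (@all_closed A) Q0 ->
  gconnected eB (@all_closed B) (g @^-1` Q0).
Proof.
move=> cQ [P [Q [[[p Pp] [q Qq]] _ _ PQ noE]]]; apply: cQ.
have inpre : forall w, (P `|` Q) w -> Q0 (g w) by rewrite PQ.
have Pc : forall w, P w -> P (c (g w)).
  move=> w Pw; have : (P `|` Q) (c (g w)) by rewrite PQ /= gc; apply: inpre; left.
  by case=> // Qc; exfalso; apply: (noE w _ Pw Qc); apply: symB.
have Qcq : forall w, Q w -> Q (c (g w)).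
  move=> w Qw; have : (P `|` Q) (c (g w)) by rewrite PQ /= gc; apply: inpre; right.
  by case=> // Pc'; exfalso; apply: (noE _ w Pc' Qw).
have PcP : forall u, (P `|` Q) u -> P (c (g u)) -> P u.
  by move=> u; case=> // Qu Pcu; exfalso; apply: (noE _ u Pcu Qu).
have QcQ : forall u, (P `|` Q) u -> Q (c (g u)) -> Q u.
  by move=> u; case=> // Pu Qcu; exfalso; apply: (noE u _ Pu Qcu); apply: symB.
exists (g @` P), (g @` Q); split.
- by split; [exists (g p), p | exists (g q), q].
- exists (g @` P); split => //; apply/seteqP; split => [a|a []//].
  by case=> w Pw <-; split; [apply: inpre; left|exists w].
- exists (g @` Q); split => //; apply/seteqP; split => [a|a []//].
  by case=> w Qw <-; split; [apply: inpre; right|exists w].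
- apply/seteqP; split => [a [] [w Hw <-]|a Q0a]; first by apply: inpre; left.
    by apply: inpre; right.
  have : (P `|` Q) (c a) by rewrite PQ /= gc.
  by case=> H; [left|right]; exists (c a) => //; rewrite gc.
- move=> a b [u Pu <-] [v Qv <-] /lift [x [y [Exy gx gy]]].
  have Hx : (P `|` Q) x by rewrite PQ /= gx; apply: inpre; left.
  have Hy : (P `|` Q) y by rewrite PQ /= gy; apply: inpre; right.
  apply: (noE x y _ _ Exy).
    by apply: PcP => //; rewrite gx; apply: Pc.
  by apply: QcQ => //; rewrite gy; apply: Qcq.
Qed.

Lemma conf_of : conf_epi eB (@all_closed B) eA (@all_closed A) g.
Proof.
split => //.
- by move=> b; exists (c b).
- move=> Q0 cQ C [Csub Cconn Cmax].
  have := Cmax (g @^-1` Q0) Csub (fun _ h => h) (pre_conn cQ).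
  move=> <-; apply/seteqP; split => [a [w Hw <-]//|a Q0a].
  by exists (c a); rewrite /= gc.
Qed.
End Pre.

Lemma fcg_of (A B : finType) (eA : rel A) (eB : rel B) (g : B -> A) (c : A -> B) :
  fin_conn_graph eA -> reflexive eB -> symmetric eB ->
  (forall a, g (c a) = a) -> (forall w, eB (c (g w)) w) ->
  (forall a b, eA a b -> exists x y, [/\ eB x y, g x = a & g y = b]) ->
  fin_conn_graph eB.
Proof.
move=> [A0 _ _ cA] rB sB gc cw lift; split => //.
- by case/card_gt0P: A0 => a _; apply/card_gt0P; exists (c a).
- have := @pre_conn A B (fun a b => eA a b) (fun a b => eB a b) g c _ gc cw lift setT cA.
  by rewrite preimage_setT; apply; move=> x y; rewrite sB.
Qed.

Lemma fconf_of (A B : finType) (eA : rel A) (eB : rel B) (g : B -> A) (c : A -> B) :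
  symmetric eB ->
  (forall a, g (c a) = a) -> (forall w, eB (c (g w)) w) ->
  (forall a b, eA a b -> exists x y, [/\ eB x y, g x = a & g y = b]) ->
  (forall x y, eB x y -> eA (g x) (g y)) ->
  fconf_epi eB eA g.
Proof.
move=> sB gc cw lift pres; apply: (@conf_of _ _ _ _ g c) => //.
by move=> x y; rewrite sB.
Qed.
Section Split.
Variables (A : finType) (eA : rel A) (b c : A).
Hypotheses (rA : reflexive eA) (sA : symmetric eA) (bc : b != c) (ebc : eA b c).

Definition eS (u v : option A) : bool :=
  match u, v with
  | Some u, Some v => eA u v && ~~ (((u == b) && (v == c)) || ((u == c) && (v == b)))
  | None, None => true
  | None, Some v => (v == b) || (v == c)
  | Some v, None => (v == b) || (v == c)
  end.
Definition gS (u : option A) : A := if u is Some u then u else b.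

Lemma eS_refl : reflexive eS.
Proof.
case=> //= u; rewrite rA /=; apply/negP => /orP[] /andP[/eqP-> /eqP cb];
  by move: bc; rewrite ?cb eqxx.
Qed.

Lemma eS_sym : symmetric eS.
Proof. by case=> [u|] [v|] //=; rewrite sA orbC [(v == c) && _]andbC [(v == b) && _]andbC. Qed.

Lemma gS_c a : gS (Some a) = a. Proof. by []. Qed.

Lemma eS_cw w : eS (Some (gS w)) w.
Proof. by case: w => [u|]; [exact: eS_refl | rewrite /= eqxx]. Qed.

Lemma eS_lift a a' : eA a a' -> exists x y, [/\ eS x y, gS x = a & gS y = a'].
Proof.
move=> e.
have [/andP[/eqP-> /eqP->]|h1] := boolP ((a == b) && (a' == c)).
  by exists None, (Some c); rewrite /= eqxx orbT.
have [/andP[/eqP-> /eqP->]|h2] := boolP ((a == c) && (a' == b)).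
  by exists (Some c), None; rewrite /= eqxx orbT.
by exists (Some a), (Some a'); rewrite /= e negb_or h1 h2.
Qed.

Lemma eS_pres x y : eS x y -> eA (gS x) (gS y).
Proof.
case: x y => [u|] [v|] //=.
- by case/andP.
- by case/orP=> /eqP->; rewrite // sA.
- by case/orP=> /eqP->.
Qed.
End Split.

Section Sub.
Variables (A : finType) (eA : rel A).
Hypotheses (rA : reflexive eA) (sA : symmetric eA).

Definition eD (u v : (A + (A * A))%type) : bool :=
  match u, v with
  | inl a, inl a' => a == a'
  | inl a, inr p => p.1 == a
  | inr p, inl a => p.1 == a
  | inr p, inr q => (p == q) || [&& p.1 == q.2, p.2 == q.1 & eA p.1 p.2]
  end.
Definition gD (u : (A + (A * A))%type) : A :=
  match u with inl a => a | inr p => p.1 end.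

Lemma eD_refl : reflexive eD.
Proof. by case=> [a|p] /=; rewrite eqxx. Qed.

Lemma eD_sym : symmetric eD.
Proof.
case=> [a|[p1 p2]] [a'|[q1 q2]] //=; try by rewrite eq_sym.
rewrite [(q1, q2) == _]eq_sym; congr (_ || _).
apply/and3P/and3P => [[/eqP e1 /eqP e2 e]|[/eqP e1 /eqP e2 e]]; subst;
  by rewrite !eqxx sA.
Qed.

Lemma eD_cw w : eD (inl (gD w)) w.
Proof. by case: w => [a|p] /=; rewrite eqxx. Qed.

Lemma eD_lift a a' : eA a a' -> exists x y, [/\ eD x y, gD x = a & gD y = a'].
Proof. by move=> e; exists (inr (a, a')), (inr (a', a)); rewrite /= !eqxx e orbT. Qed.

Lemma eD_pres x y : eD x y -> eA (gD x) (gD y).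
Proof.
case: x y => [a|[p1 p2]] [a'|[q1 q2]] /=.
- by move/eqP->.
- by move/eqP->.
- by move/eqP->.
- by case/orP=> [/eqP[-> _]|/and3P[/eqP-> /eqP-> e]] /=; rewrite ?rA.
Qed.
End Sub.
Local Open Scope ring_scope.
Section Anal.
Variables (R : realType).

Lemma unif (T : pseudoMetricType R) (Q : T -> R -> Prop) :
  compact [set: T] ->
  (forall x, exists2 r, 0 < r & forall y d, ball x r y -> 0 < d -> d <= r -> Q y d) ->
  exists2 d, 0 < d & forall y, Q y d.
Proof.
move=> /compact_near_coveringP cpt H.
have : \forall d \near at_right (0:R), [set: T] `<=` (fun y => Q y d).
  apply: cpt => x _; have [r r0 Hr] := H x.
  exists (ball x r, [set d | 0 < d <= r]).
    split; first exact: nbhsx_ballx.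
    exists r => //= d; rewrite /ball_ /= sub0r normrN => /ltr_normlW dr d0.
    by rewrite d0 ltW.
  by case=> y d /= [yb /andP[d0 dr]]; apply: Hr.
move=> F.
have := @filter_ex _ _ (at_right_proper_filter 0) _ (filterI F (nbhs_right_gt (0:R))).
case=> d [Fd d0].
by exists d => // y; apply: Fd.
Qed.

Lemma lebesgue (T : pseudoMetricType R) (I : Type) (O : I -> set T) :
  compact [set: T] -> (forall i, open (O i)) -> (forall x, exists i, O i x) ->
  exists2 d, 0 < d & forall x, exists i, ball x d `<=` O i.
Proof.
move=> cpt oO cov.
apply: (unif (Q := fun y d => exists i, ball y d `<=` O i)) => // x.
have [i Oix] := cov x.
have /nbhs_ballP [e e0 He] : nbhs x (O i) by apply: open_nbhs_nbhs; split.
exists (e / 2); first by rewrite divr_gt0.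
move=> y d xy d0 de; exists i => z yz; apply: He.
rewrite [e]splitr; apply: ball_triangle xy _.
exact: le_ball de _ yz.
Qed.


Lemma I_open (V : pseudoMetricType R) (E : V -> V -> Prop) :
  compact [set: V] -> closed [set p : V * V | E p.1 p.2] ->
  forall K : set V, open K -> open [set x | forall y, E x y -> K y].
Proof.
move=> cpt clE K oK; rewrite openE => x Hx.
rewrite /interior; apply/nbhs_ballP.
case: (unif (Q := fun y d => K y \/
   (forall x' y', ball x d x' -> ball y d y' -> ~ E x' y')) cpt) => [y|d d0 Hd]; last first.
  exists d => // x' xx' y Exy; apply: contrapT => Ky.
  case: (Hd y) => // /(_ x' y xx' (ballxx _ d0)); exact.
have [Ky|nKy] := pselect (K y).
  have /nbhs_ballP [e e0 He] : nbhs y K by apply: open_nbhs_nbhs; split.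
  exists (e / 2); first by rewrite divr_gt0.
  move=> y1 d1 yy1 d10 d1e; left; apply: He.
  by apply: le_ball yy1; lra.
have nE : ~ E x y by move=> /Hx.
have : nbhs (x, y) (~` [set p : V * V | E p.1 p.2]).
  by apply: open_nbhs_nbhs; split; [exact: closed_openC|].
move=> /nbhs_ballP [e e0 He].
exists (e / 2); first by rewrite divr_gt0.
move=> y1 d1 yy1 d10 d1e; right => x' y' xx' y1y'.
apply: (He (x', y')); split => /=.
  by apply: le_ball xx'; apply: (le_trans d1e); lra.
rewrite [e]splitr; apply: ball_triangle yy1 _.
exact: le_ball d1e _ y1y'.
Qed.

End Anal.

Section Main.
Variables (R : realType) (V : pseudoMetricType R) (E : V -> V -> Prop).
Hypotheses (tg : topgraph E) (F1 : fraisse1 E) (F2 : fraisse2 E) (F3 : fraisse3 E).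

Lemma sep_ball (x y : V) : x != y -> exists2 r : R, 0 < r & ~ ball x r y.
Proof.
case: tg => _ zd _ _ _ xy.
have [U [[oU _] Ux nUy]] := zd x y xy.
have /nbhs_ballP [r r0 Hr] : nbhs x U by apply: open_nbhs_nbhs; split.
by exists r => // /Hr.
Qed.

Lemma no_path x y z : E x y -> E y z -> x != y -> y != z -> x != z -> False.
Proof.
move=> Exy Eyz nxy nyz nxz.
have [r1 r10 H1] := sep_ball nxy.
have [r2 r20 H2] := sep_ball nyz.
have [r3 r30 H3] := sep_ball nxz.
pose r := Num.min r1 (Num.min r2 r3).
have r0 : 0 < r by rewrite !lt_min r10 r20 r30.
have [A [eA [f [fcg [fo [fpres fsurj flift fconf]] fib]]]] := F3 r0.
have dist u v (ruv : R) : r <= ruv -> ~ ball u ruv v -> f u != f v.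
  move=> le nb; apply/eqP => fuv; have [d dr Hd] := fib (f u).
  by apply: nb; apply: (le_ball (e1 := d)); [lra | apply: Hd].
have nab : f x != f y by apply: (dist _ _ r1) => //; rewrite /r !ge_min lexx.
have nbc : f y != f z by apply: (dist _ _ r2) => //; rewrite /r !ge_min lexx orbT.
have nac : f x != f z by apply: (dist _ _ r3) => //; rewrite /r !ge_min lexx !orbT.
have eab := fpres _ _ Exy.
have ebc := fpres _ _ Eyz.
case: fcg => A0 rA sA cA.
have fcgB := @fcg_of A _ eA (eS eA (f y) (f z)) (gS (f y)) Some (And4 A0 rA sA cA)
  (eS_refl rA nbc) (eS_sym (f y) (f z) sA) (gS_c (f y)) (eS_cw rA nbc)
  (fun a a' => @eS_lift _ eA (f y) (f z) a a').
have fcB := @fconf_of A _ eA (eS eA (f y) (f z)) (gS (f y)) Some (eS_sym (f y) (f z) sA)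
  (gS_c (f y)) (eS_cw rA nbc) (fun a a' => @eS_lift _ eA (f y) (f z) a a')
  (fun u v => @eS_pres _ eA (f y) (f z) rA sA ebc u v).
have [h [[_ [hpres _ _ _]] fgh]] :=
  F2 (And4 A0 rA sA cA) fcgB (conj fo (And4 fpres fsurj flift fconf)) fcB.
have fp : forall w, f w = gS (f y) (h w) by move=> w; rewrite {1}fgh.
have hx : h x = Some (f x).
  case Eh: (h x) => [u|]; first by rewrite fp Eh.
  by move: nab; rewrite fp Eh eqxx.
have hz : h z = Some (f z).
  case Eh: (h z) => [u|]; first by rewrite fp Eh.
  by move: nbc; rewrite [f z]fp Eh eqxx.
have e1 := hpres _ _ Exy; have e2 := hpres _ _ Eyz.
rewrite hx in e1; rewrite hz in e2.
move: e1 e2; have := fp y.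
case: (h y) => [u|] /= fy.
- rewrite -fy => /andP[_ n1] /andP[_ n2]; move: n2; rewrite !eqxx /=.
  done.
- by rewrite (negbTE nab) (negbTE nac).
Qed.

End Main.

Lemma openX (U V : topologicalType) (A : set U) (B : set V) :
  open A -> open B -> open (A `*` B).
Proof.
move=> oA oB; rewrite openE => [[x y] [Ax By]].
rewrite /interior; exists (A, B) => //=; split => /=; apply: open_nbhs_nbhs; split => //.
Qed.

Lemma pre_open (V : topologicalType) (A : Type) (f : V -> A) :
  (forall a, open (f @^-1` [set a])) -> forall S, open (f @^-1` S).
Proof.
move=> fo S; have -> : f @^-1` S = \bigcup_(a in S) f @^-1` [set a].
  by apply/seteqP; split => [x Sx|x [a Sa /= ->]//]; exists (f x).
by apply: bigcup_open => a _; apply: fo.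
Qed.

Section Main2.
Variables (R : realType) (V : pseudoMetricType R) (E : V -> V -> Prop).
Hypotheses (tg : topgraph E) (F1 : fraisse1 E) (F2 : fraisse2 E) (F3 : fraisse3 E).

Let rE x : E x x. Proof. by case: tg. Qed.
Let sE x y : E x y -> E y x. Proof. by case: tg => _ _ _ _; apply. Qed.
Let cpt : compact [set: V]. Proof. by case: tg => [[]]. Qed.
Let clE : closed [set p : V * V | E p.1 p.2]. Proof. by case: tg. Qed.

Lemma Etrans x y z : E x y -> E y z -> E x z.
Proof.
move=> Exy Eyz.
have [<-|nxz] := eqVneq x z; first exact: rE.
have [exy|nxy] := eqVneq x y; first by rewrite exy.
have [eyz|nyz] := eqVneq y z; first by rewrite -eyz.
by exfalso; apply: (no_path tg F2 F3 Exy Eyz).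
Qed.

Lemma Eclass_eq x y : E x y -> E x = E y.
Proof.
move=> Exy; apply/funext => z; apply/propext; split => H.
  exact: Etrans (sE Exy) H.
exact: Etrans Exy H.
Qed.

Definition mkR (x : V) : @realization R V E := exist _ (E x) (ex_intro _ x erefl).

Lemma real_class (C : @realization R V E) u : sval C u -> sval C = E u.
Proof. case: C => /= C [w ->] Ewu; exact: Eclass_eq. Qed.

Lemma real_eq (C D : @realization R V E) : sval C = sval D -> C = D.
Proof. apply: eq_sig_hprop => ? ? ?; exact: Prop_irrelevance. Qed.

Lemma real_mem (C : @realization R V E) : exists u, sval C u.
Proof. case: C => /= C [w ->]; exists w; exact: rE. Qed.

Lemma ropen (K : set V) : open K ->
  realization_open [set C : @realization R V E | sval C `<=` K].
Proof.
move=> oK; rewrite /realization_open.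
have -> : [set x | exists C : @realization R V E, [set C | sval C `<=` K] C /\ sval C x]
    = [set x | forall y, E x y -> K y].
  apply/seteqP; split => x /=.
    by case=> C [CK Cx] y Exy; apply: CK; rewrite (real_class Cx).
  by move=> H; exists (mkR x); split => //=; exact: rE.
exact: (I_open cpt clE oK).
Qed.

Definition Ut k (U : 'I_k -> set (@realization R V E)) i :=
  [set x | exists C, U i C /\ sval C x].

Lemma elebesgue k (U : 'I_k -> set (@realization R V E)) :
  (forall i, realization_open (U i)) -> (forall C, exists i, U i C) ->
  exists2 d : R, 0 < d & forall x y, E x y ->
    exists i, ball x d `<=` Ut U i /\ ball y d `<=` Ut U i.
Proof.
move=> oU covU.
have cptX : compact [set: V * V] by rewrite -setXTT; apply: compact_setX.
have := @lebesgue R _ _ (fun o : option 'I_k =>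
   if o is Some i then Ut U i `*` Ut U i else ~` [set p : V * V | E p.1 p.2]) cptX.
case.
- case=> [i|]; [apply: openX; apply: oU | exact: closed_openC].
- case=> x y; have [Exy|nE] := pselect (E x y); last by exists None.
  have [i Ui] := covU (mkR x); exists (Some i); split; exists (mkR x); split => //=.
move=> d d0 Hd; exists d => // x y Exy; have [[i|] Hi] := Hd (x, y).
  exists i; split => z hz.
    by case: (Hi (z, y) (conj hz (ballxx _ d0))).
  by case: (Hi (x, z) (conj (ballxx _ d0) hz)).
by exfalso; apply: (Hi (x, y) (conj (ballxx _ d0) (ballxx _ d0))).
Qed.


Lemma upper : covdim_le (@realization_open R V E) 1.
Proof.
move=> k U oU covU.
have [d d0 Hd] := elebesgue oU covU.
have inU i (C : @realization R V E) u : sval C u -> Ut U i u -> U i C.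
  move=> Cu [D [UD Du]]; suff -> : C = D by [].
  by apply: real_eq; rewrite (real_class Cu) (real_class Du).
have [A [eA [f [fcg [fo [fpres fsurj flift fconf]] fib]]]] := F3 d0.
case: fcg => A0 rA sA cA.
have fcgB := @fcg_of A _ eA (eD eA) (@gD A) inl (And4 A0 rA sA cA) (eD_refl eA)
  (eD_sym sA) (fun a => erefl) (eD_cw eA) (fun a a' => @eD_lift A eA a a').
have fcB := @fconf_of A _ eA (eD eA) (@gD A) inl (eD_sym sA) (fun a => erefl)
  (eD_cw eA) (fun a a' => @eD_lift A eA a a') (fun u v => @eD_pres A eA rA u v).
have [h [[ho [hpres _ _ _]] fgh]] :=
  F2 (And4 A0 rA sA cA) fcgB (conj fo (And4 fpres fsurj flift fconf)) fcB.
have fp : forall w, f w = gD (h w) by move=> w; rewrite fgh.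
pose rk (a : A) := nat_of_ord (enum_rank a).
pose good (p : A * A) := (rk p.1 < rk p.2)%N && eA p.1 p.2.
pose Wt (t : (A + (A * A))%type) : set (@realization R V E) :=
  match t with
  | inl a => [set C | sval C `<=` f @^-1` [set a]]
  | inr p => if good p then
      [set C | sval C `<=` h @^-1` [set w | w = inr p \/ w = inr (p.2, p.1)]]
      else set0
  end.
exists #|{: (A + (A * A))%type}|, (fun j => Wt (enum_val j)); split.
- move=> j; case: (enum_val j) => [a|p] /=; first by apply: ropen; apply: fo.
  case: (good p); first by apply: ropen; exact: (pre_open ho).
  rewrite /realization_open.
  have -> : [set x | exists C : @realization R V E, set0 C /\ sval C x] = set0.
    by apply/seteqP; split => x // [C []].
  exact: open0.
- move=> C; have [x Cx] := real_mem C; have CE := real_class Cx.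
  have adj : forall y, sval C y -> eD eA (h x) (h y).
    by move=> y; rewrite CE => /hpres.
  have adj2 : forall y z, sval C y -> sval C z -> eD eA (h y) (h z).
    by rewrite CE => y z Ey Ez; apply: hpres; exact: Etrans (sE Ey) Ez.
  suff [t Ht] : exists t, Wt t C by exists (enum_rank t); rewrite enum_rankK.
  case Ehx: (h x) adj => [a|[p1 p2]] adj.
    exists (inl a) => y /adj; rewrite /= fp.
    by case: (h y) => [a'|[q1 q2]] /= /eqP ->.
  have [allp|] := pselect (forall y, sval C y -> f y = p1).
    by exists (inl p1) => y /allp.
  move=> /existsNP [y /not_implyP [Cy fy]].
  have := adj y Cy; rewrite (fp y) in fy.
  case Ehy : (h y) fy => [a|[q1 q2]] /= fy.
    by move/eqP => e1; rewrite e1 in fy.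
  case/orP => [/eqP[e1 e2]|/and3P[/eqP e1 /eqP e2 e12]]; first by rewrite e1 in fy.
  subst q1 q2.
  have n12 : p1 != p2 by apply/eqP => e; apply: fy; rewrite e.
  have allz : forall z, sval C z -> h z = inr (p1, p2) \/ h z = inr (p2, p1).
    move=> z Cz; have := adj z Cz; have := adj2 y z Cy Cz; rewrite Ehy.
    case: (h z) => [a|[r1 r2]] /=.
      by move=> /eqP e1 /eqP e2; move: n12; rewrite e1 e2 eqxx.
    move=> _ /orP [/eqP ->|/and3P[/eqP e1 /eqP e2 _]]; first by left.
    by right; rewrite e1 e2.
  have [lt12|ge12] := boolP (rk p1 < rk p2)%N.
    exists (inr (p1, p2)); rewrite /= /good /= lt12 e12 /=.
    by move=> z /allz.
  exists (inr (p2, p1)); rewrite /= /good /=.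
  have -> : (rk p2 < rk p1)%N.
    rewrite ltn_neqAle leqNgt ge12 andbT; apply/eqP => /val_inj/enum_rank_inj e.
    by move: n12; rewrite e eqxx.
  rewrite sA e12 /= => z /allz [] hz; rewrite /preimage /= hz; by [right|left].
- move=> j; case: (enum_val j) => [a|[p1 p2]] /=.
    have [x fx] := fsurj a; have [i [Hi _]] := Hd x x (rE x).
    exists i => C HC; have [u Cu] := real_mem C; apply: (inU i C u Cu); apply: Hi.
    have [e ed He] := fib a; apply: (le_ball (e1 := e)); first exact: ltW.
    by apply: He => //; apply: HC.
  case Eg: (good (p1, p2)); last first.
    have [x _] := fsurj p1; have [i _] := covU (mkR x); by exists i => C.
  move: Eg => /andP [_ e12]; have [x [y [Exy fx fy]]] := flift _ _ e12.
  have [i [Hx Hy]] := Hd x y Exy.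
  exists i => C HC; have [u Cu] := real_mem C; apply: (inU i C u Cu).
  have := HC u Cu; rewrite /preimage /= => hu.
  have [fu|fu] : f u = p1 \/ f u = p2 by rewrite fp; case: hu => ->; [left|right].
    apply: Hx; have [e ed He] := fib p1; apply: (le_ball (e1 := e)); first exact: ltW.
    exact: He.
  apply: Hy; have [e ed He] := fib p2; apply: (le_ball (e1 := e)); first exact: ltW.
  exact: He.
- move=> C S HS; have [u Cu] := real_mem C.
  have inl_u : forall a a', Wt (inl a) C -> Wt (inl a') C -> a = a'.
    by move=> a a' /= /(_ u Cu) <- /(_ u Cu) <-.
  have inr_u : forall p q, Wt (inr p) C -> Wt (inr q) C -> p = q.
    move=> [p1 p2] [q1 q2] /=.
    case Gp: (good (p1, p2)) => // Hp; case Gq: (good (q1, q2)) => // Hq.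
    move: Gp Gq => /andP [/= lp _] /andP [/= lq _].
    have := Hp u Cu; have := Hq u Cu; rewrite /preimage /=.
    case=> -> [] [e1 e2]; subst => //.
    + by move: (ltn_trans lp lq); rewrite ltnn.
    + by move: (ltn_trans lp lq); rewrite ltnn.
  pose isl (t : (A + (A * A))%type) := if t is inl _ then true else false.
  pose L := [set j in S | isl (enum_val j)].
  rewrite -(cardsID L S).
  have -> : (2 = 1 + 1)%N by [].
  apply: leq_add; apply/card_le1_eqP => j1 j2.
    rewrite !inE => /andP [Sj1 /andP [_ Lj1]] /andP [Sj2 /andP [_ Lj2]].
    apply: enum_val_inj.
    move: (HS _ Sj1) (HS _ Sj2) Lj1 Lj2.
    case: (enum_val j1) => [a1|p1]; case: (enum_val j2) => [a2|p2] //= W1 W2 _ _.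
    by rewrite (inl_u _ _ W1 W2).
  rewrite !inE => /andP [Lj1 Sj1] /andP [Lj2 Sj2]; apply: enum_val_inj.
  rewrite Sj1 /= in Lj1; rewrite Sj2 /= in Lj2.
  move: (HS _ Sj1) (HS _ Sj2) Lj1 Lj2.
  case: (enum_val j1) => [a1|p1]; case: (enum_val j2) => [a2|p2] //= W1 W2 _ _.
  by rewrite (inr_u _ _ W1 W2).
Qed.

Definition eP (u v : option bool) : bool := [|| u == v, u == None | v == None].

Lemma fcgP : fin_conn_graph eP.
Proof.
split.
- by apply/card_gt0P; exists None.
- by move=> u; rewrite /eP eqxx.
- by case=> [[]|] [[]|].
- apply: (@star_conn _ _ _ _ None) => //.
    by case=> [[]|] [[]|].
  by move=> y _; rewrite /eP eqxx orbT.
Qed.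

Lemma lower : ~ covdim_le (@realization_open R V E) 0.
Proof.
move=> H.
have [f [fo [fpres fsurj flift fconf]]] := F1 fcgP.
pose K1 := f @^-1` [set u | u != Some false].
pose K2 := f @^-1` [set u | u != Some true].
pose i0 : 'I_2 := ord0.
pose i1 : 'I_2 := Ordinal (isT : (1 < 2)%N).
pose U : 'I_2 -> set (@realization R V E) := fun i =>
  if val i == 0%N then [set C | sval C `<=` K1] else [set C | sval C `<=` K2].
have oU : forall i, realization_open (U i).
  by move=> i; rewrite /U; case: ifP => _; apply: ropen; exact: (pre_open fo).
have covU : forall C, exists i, U i C.
  move=> C; have [x Cx] := real_mem C; have CE := real_class Cx.
  have [[y [Cy fy]]|nF] := pselect (exists y, sval C y /\ f y = Some false).
    exists i1; rewrite /U /= => z Cz; rewrite /K2 /preimage /=.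
    have := fpres y z; rewrite CE in Cy Cz.
    move=> /(_ (Etrans (sE Cy) Cz)); rewrite fy.
    by case: (f z) => [[]|].
  exists i0; rewrite /U /= => z Cz; rewrite /K1 /preimage /=.
  by apply/eqP => fz; apply: nF; exists z.
have [m [W [oW covW refW ordW]]] := H 2 U oU covU.
pose Wu j := [set x | exists C, W j C /\ sval C x].
pose S1 := \bigcup_(j in [set j | W j `<=` U i0]) Wu j.
pose S2 := \bigcup_(j in [set j | W j `<=` U i1 /\ ~ (W j `<=` U i0)]) Wu j.
have oS1 : open S1 by apply: bigcup_open => j _; exact: oW j.
have oS2 : open S2 by apply: bigcup_open => j _; exact: oW j.
have cov12 : forall x, S1 x \/ S2 x.
  move=> x; have [j Wj] := covW (mkR x); have [i Hi] := refW j.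
  have Wux : Wu j x by exists (mkR x); split => //=; exact: rE.
  have [H0|H0] := pselect (W j `<=` U i0); first by left; exists j.
  right; exists j => //; split => //.
  suff -> : i1 = i by [].
  apply: val_inj; case: i Hi => [[|[|n]] //= ni] Hi.
have disj : forall x, S1 x -> S2 x -> False.
  move=> x [j1 Hj1 [C1 [W1 C1x]]] [j2 [Hj2 Hn] [C2 [W2 C2x]]].
  have eC : C1 = C2 by apply: real_eq; rewrite (real_class C1x) (real_class C2x).
  have nj : j1 != j2 by apply/eqP => ej; apply: Hn; rewrite -ej.
  suff : (#|[set j1; j2]%SET| <= 1)%N by rewrite cards2 nj.
  apply: (ordW C1).
  by move=> j; rewrite !inE => /orP [/eqP->|/eqP->] //; rewrite eC.
have sat1 : forall x y, S1 x -> E x y -> S1 y.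
  move=> x y [j Hj [C [WC Cx]]] Exy; exists j => //; exists C; split => //.
  by rewrite (real_class Cx).
have sat2 : forall x y, S2 x -> E x y -> S2 y.
  move=> x y [j Hj [C [WC Cx]]] Exy; exists j => //; exists C; split => //.
  by rewrite (real_class Cx).
have t1 : forall x, f x = Some true -> S1 x.
  move=> x fx; case: (cov12 x) => // [[j [Hj _] [C [WC Cx]]]].
  by have := Hj C WC x Cx; rewrite /K2 /preimage /= fx eqxx.
have t2 : forall x, f x = Some false -> S2 x.
  move=> x fx; case: (cov12 x) => // [[j Hj [C [WC Cx]]]].
  by have := Hj C WC x Cx; rewrite /K1 /preimage /= fx eqxx.
have [d d0 Hd] := @lebesgue R V bool (fun b => if b then S1 else S2) cpt
  (fun b => if b as b return open (if b then S1 else S2) then oS1 else oS2)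
  (fun x => match cov12 x with or_introl h => ex_intro _ true h
                             | or_intror h => ex_intro _ false h end).
have [A' [eA' [f' [fcg' [fo' [fpres' fsurj' flift' _]] fib']]]] := F3 d0.
case: fcg' => _ _ _ cA'; apply: cA'.
have side1 : forall x, S1 x -> forall y, f' y = f' x -> S1 y.
  move=> x S1x y fy; have [[] Hb] := Hd x.
    apply: Hb; have [e ed He] := fib' (f' x); apply: (le_ball (e1 := e)); first exact: ltW.
    exact: He.
  by exfalso; apply: (disj x S1x); apply: Hb; exact: ballxx.
have side2 : forall x, S2 x -> forall y, f' y = f' x -> S2 y.
  move=> x S2x y fy; have [[] Hb] := Hd x.
    by exfalso; apply: (disj x) S2x; apply: Hb; exact: ballxx.
  apply: Hb; have [e ed He] := fib' (f' x); apply: (le_ball (e1 := e)); first exact: ltW.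
  exact: He.
exists [set a | exists x, f' x = a /\ S1 x], [set a | exists x, f' x = a /\ S2 x]; split.
- split.
    by have [x fx] := fsurj (Some true); exists (f' x), x; split => //; exact: t1.
  by have [x fx] := fsurj (Some false); exists (f' x), x; split => //; exact: t2.
- by eexists; split; last by rewrite setTI.
- by eexists; split; last by rewrite setTI.
- apply/seteqP; split => // a _; have [x fx] := fsurj' a.
  by case: (cov12 x) => ?; [left|right]; exists x.
- move=> a b [x1 [fx1 S1x1]] [x2 [fx2 S2x2]] /flift' [x [y [Exy fx fy]]].
  have S1x : S1 x by apply: (side1 x1) => //; rewrite fx fx1.
  have S2y : S2 y by apply: (side2 x2) => //; rewrite fy fx2.
  exact: (disj y (sat1 x y S1x Exy) S2y).
Qed.

End Main2.

Unset Implicit Arguments.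

Theorem mainTheorem5 (R : realType) (V : pseudoMetricType R) (E : V -> V -> Prop) :
  topgraph E -> fraisse1 E -> fraisse2 E -> fraisse3 E ->
  one_dimensional (@realization_open R V E).
Proof.
move=> tg F1 F2 F3; split; [exact: upper | exact: lower].
Qed.
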